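(* Consider the procedures $\mathrm{Solve}_\mathsf{E}$ and $\mathrm{Solve}_\mathsf{O}$ defined in the context (Algorithm 2). Let $G$ be a subgame, $p_\mathsf{E},p_\mathsf{O}$ positive integers, and $d$ a nonnegative integer not smaller than the maximal priority in $G$. If $d$ is even, the set returned by $\mathrm{Solve}_\mathsf{E}(G,d,p_\mathsf{E},p_\mathsf{O})$ (i) contains every dominion of Even in $G$ of size at most $p_\mathsf{E}$, and (ii) is disjoint from every dominion of Odd in $G$ of size at most $p_\mathsf{O}$. If $d$ is odd, the set returned by $\mathrm{Solve}_\mathsf{O}(G,d,p_\mathsf{O},p_\mathsf{E})$ (i) contains every dominion of Odd in $G$ of size at most $p_\mathsf{O}$, and (ii) is disjoint from every dominion of Even in $G$ of size at most $p_\mathsf{E}$. (In particular, all loops in the procedures terminate.)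
   Context: A parity game is $\mathcal{G}=(V,V_\mathsf{E},E,\pi)$: $(V,E)$ a finite directed graph without self-loops, every vertex having a successor; $\pi\colon V\to\{1,\dots,d\}$ positive priorities; $V_\mathsf{E}$ Even's vertices, $V_\mathsf{O}=V\setminus V_\mathsf{E}$ Odd's vertices. A play is won by Even iff the highest priority seen infinitely often is even, else by Odd. A subgame is given by $G\subseteq V$ in which every vertex has a successor in $G$. A dominion of player $\wp$ in $G$ is $D\subseteq G$ such that from every $v\in D$, $\wp$ has a winning strategy in $G$ agreeing only with plays staying forever in $D$. $\mathrm{Attr}_\wp(S,G)$ is the set of vertices from which $\wp$ has a strategy in $G$ agreeing only with plays reaching $S$. Algorithm 2. $\mathrm{Solve}_\mathsf{E}(G,d,p_\mathsf{E},p_\mathsf{O})$ (for even $d$): if $G=\emptyset$ or $p_\mathsf{E}\le 1$, return $\emptyset$. Otherwise: repeat $\{N_d:=\{v\in G:\pi(v)=d\}$; $H:=G\setminus\mathrm{Attr}_\mathsf{E}(N_d,G)$; $W_\mathsf{O}:=\mathrm{Solve}_\mathsf{O}(H,d-1,\lfloor p_\mathsf{O}/2\rfloor,p_\mathsf{E})$; $G:=G\setminus\mathrm{Attr}_\mathsf{O}(W_\mathsf{O},G)\}$ until $W_\mathsf{O}=\emptyset$. Then (with $H$ from the last repeat iteration) $W_\mathsf{O}:=\mathrm{Solve}_\mathsf{O}(H,d-1,p_\mathsf{O},p_\mathsf{E})$; $G:=G\setminus\mathrm{Attr}_\mathsf{O}(W_\mathsf{O},G)$. Then while $W_\mathsf{O}\ne\emptyset$: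 $\{N_d:=\{v\in G:\pi(v)=d\}$; $H:=G\setminus\mathrm{Attr}_\mathsf{E}(N_d,G)$; $W_\mathsf{O}:=\mathrm{Solve}_\mathsf{O}(H,d-1,\lfloor p_\mathsf{O}/2\rfloor,p_\mathsf{E})$; $G:=G\setminus\mathrm{Attr}_\mathsf{O}(W_\mathsf{O},G)\}$. Return $G$. $\mathrm{Solve}_\mathsf{O}(G,d,p_\mathsf{O},p_\mathsf{E})$ (for odd $d$) is the dual, obtained by swapping the roles of Even and Odd: it returns $\emptyset$ if $G=\emptyset$ or $p_\mathsf{O}\le 1$; otherwise it uses $H:=G\setminus\mathrm{Attr}_\mathsf{O}(N_d,G)$, $W_\mathsf{E}:=\mathrm{Solve}_\mathsf{E}(H,d-1,\lfloor p_\mathsf{E}/2\rfloor,p_\mathsf{O})$ in both loops, $W_\mathsf{E}:=\mathrm{Solve}_\mathsf{E}(H,d-1,p_\mathsf{E},p_\mathsf{O})$ in the middle step, and updates $G:=G\setminus\mathrm{Attr}_\mathsf{E}(W_\mathsf{E},G)$. *)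

(* Defs.v *)
From mathcomp Require Import all_boot.
Set Implicit Arguments. Unset Strict Implicit. Unset Printing Implicit Defensive.

Inductive player := Even | Odd.

Definition opp (p : player) : player := match p with Even => Odd | Odd => Even end.
Definition is_odd_player (p : player) : bool := match p with Even => false | Odd => true end.
(* The player "matching" the parity of d: Solve_E for even d, Solve_O for odd d. *)
Definition player_of_parity (d : nat) : player := if odd d then Odd else Even.

Section ParityGames.
Variables (V : finType) (E : rel V) (VE : {set V}) (pi : V -> nat).

Definition owner (v : V) : player := if v \in VE then Even else Odd.

(* A (history-dependent) strategy: maps the finite history (last element =
   current vertex) to the chosen successor. *)
Definition strategy := seq V -> V.

Definition valid_strategy (p : player) (G : {set V}) (s : strategy) : Prop :=
  forall (h : seq V) (v : V), v \in G -> owner v = p ->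
    s (rcons h v) \in G /\ E v (s (rcons h v)).

Definition play_in (G : {set V}) (v : V) (r : nat -> V) : Prop :=
  r 0 = v /\ forall i, r i \in G /\ E (r i) (r i.+1).

Definition consistent (p : player) (s : strategy) (r : nat -> V) : Prop :=
  forall i, owner (r i) = p -> r i.+1 = s (mkseq r i.+1).

Definition wins (p : player) (r : nat -> V) : Prop :=
  exists q, odd q = is_odd_player p /\
    (forall n, exists m, n <= m /\ pi (r m) = q) /\
    (exists n, forall m, n <= m -> pi (r m) <= q).

Definition subgame (G : {set V}) : Prop :=
  forall v, v \in G -> exists w, w \in G /\ E v w.

Definition dominion (p : player) (G D : {set V}) : Prop :=
  D \subset G /\
  forall v, v \in D -> exists s, valid_strategy p G s /\
    forall r, play_in G v r -> consistent p s r ->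
      (forall i, r i \in D) /\ wins p r.

Definition attr (p : player) (S G : {set V}) (v : V) : Prop :=
  v \in G /\ exists s, valid_strategy p G s /\
    forall r, play_in G v r -> consistent p s r -> exists i, r i \in S.

Definition remove_attr (p : player) (S G G' : {set V}) : Prop :=
  forall v, v \in G' <-> (v \in G /\ ~ attr p S G v).

Definition top_prio (G : {set V}) (d : nat) : {set V} := [set v in G | pi v == d].

(* Big-step semantics of Algorithm 2.  solveR d G pm po R means: the procedure
   of the player me := player_of_parity d (Solve_E if d even, Solve_O if d
   odd), called with own bound pm and opponent bound po, terminates and
   returns R.  That is:
     Solve_E(G,d,pE,pO) = R  <->  solveR d G pE pO R   (d even)
     Solve_O(G,d,pO,pE) = R  <->  solveR d G pO pE R   (d odd)
   repeatR d G pm po Gf Hf : the "repeat ... until W = empty" loop started on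
   G terminates with current game Gf and last H equal to Hf.
   whileR d W G pm po Gf : the final "while W <> empty" loop started on
   (W, G) terminates with game Gf. *)
Inductive solveR : nat -> {set V} -> nat -> nat -> {set V} -> Prop :=
| solve_triv d G pm po :
    (G = set0 \/ pm <= 1) -> solveR d G pm po set0
| solve_step d G pm po Gl Hl W G2 Gf :
    G != set0 -> 1 < pm ->
    repeatR d.+1 G pm po Gl Hl ->
    solveR d Hl po pm W ->
    remove_attr (opp (player_of_parity d.+1)) W Gl G2 ->
    whileR d.+1 W G2 pm po Gf ->
    solveR d.+1 G pm po Gf
with repeatR : nat -> {set V} -> nat -> nat -> {set V} -> {set V} -> Prop :=
| repeat_stop d G pm po H W G' :
    remove_attr (player_of_parity d) (top_prio G d) G H ->
    solveR d.-1 H (po %/ 2) pm W ->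
    remove_attr (opp (player_of_parity d)) W G G' ->
    W = set0 ->
    repeatR d G pm po G' H
| repeat_go d G pm po H W G' Gf Hf :
    remove_attr (player_of_parity d) (top_prio G d) G H ->
    solveR d.-1 H (po %/ 2) pm W ->
    remove_attr (opp (player_of_parity d)) W G G' ->
    W != set0 ->
    repeatR d G' pm po Gf Hf ->
    repeatR d G pm po Gf Hf
with whileR : nat -> {set V} -> {set V} -> nat -> nat -> {set V} -> Prop :=
| while_stop d W G pm po :
    W = set0 -> whileR d W G pm po G
| while_go d W G pm po Gf Hf :
    W != set0 -> repeatR d G pm po Gf Hf -> whileR d W G pm po Gf.

End ParityGames.

(* Main.v *)
Require Import Defs.
From HB Require Import structures.
From mathcomp Require Import all_boot.
From Stdlib Require Import Classical_Prop.
From mathcomp Require Import zify.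
Set Implicit Arguments. Unset Strict Implicit. Unset Printing Implicit Defensive.

Definition player_eqb (a b : player) : bool :=
  match a, b with Even, Even | Odd, Odd => true | _, _ => false end.
Lemma player_eqP : Equality.axiom player_eqb.
Proof. by case; case; constructor. Qed.
HB.instance Definition _ := hasDecEq.Build player player_eqP.

Lemma oppK p : opp (opp p) = p. Proof. by case: p. Qed.

Section PG.
Variables (V : finType) (E : rel V) (VE : {set V}) (pi : V -> nat).

Local Notation own := (owner VE).

Lemma own_cases u p : own u = p \/ own u = opp p.
Proof. by rewrite /owner; case: (u \in VE); case: p; auto. Qed.

Lemma own_opp u p : own u = opp p -> own u == p = false.
Proof. by move=> ->; case: p. Qed.

Definition dflt (X : {set V}) (u : V) : V := odflt u [pick w | (w \in X) && E u w].

Lemma dfltP X u : subgame E X -> u \in X -> dflt X u \in X /\ E u (dflt X u).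
Proof.
move=> HX /HX [w [Hw Huw]]; rewrite /dflt; case: pickP => [x /andP[]//|/(_ w)].
by rewrite Hw Huw.
Qed.

Definition Fa (p : player) (S X A : {set V}) : {set V} :=
  [set u in X | (u \in S) || (if own u == p then [exists w, [&& w \in X, E u w & w \in A]]
     else [forall w, ((w \in X) && E u w) ==> (w \in A)])].

Lemma Fa_mono p (S X : {set V}) : {homo Fa p S X : A B / A \subset B}.
Proof.
move=> A B /subsetP AB; apply/subsetP => u; rewrite !inE => /andP[-> /orP[->//|H]].
apply/orP; right; case: ifP H => _.
  by move=> /existsP[w /and3P[a b c]]; apply/existsP; exists w; rewrite a b AB.
by move=> /forallP H; apply/forallP => w; apply/implyP => /(implyP (H w)) /AB.
Qed.

Definition aset p S X := fixset (Fa p S X).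
Definition rk p S X u := fix_order (Fa p S X) u.

Lemma aset_fix p (S X : {set V}) : Fa p S X (aset p S X) = aset p S X.
Proof. exact: fixsetK (Fa_mono p S X). Qed.

Lemma aset_sub p (S X : {set V}) : aset p S X \subset X.
Proof. by rewrite -aset_fix; apply/subsetP => u; rewrite inE => /andP[]. Qed.

Lemma aset_subP p (S X : {set V}) u : u \in aset p S X -> u \in X.
Proof. exact: (subsetP (aset_sub p S X)). Qed.

Lemma aset_S p (S X : {set V}) u : u \in X -> u \in S -> u \in aset p S X.
Proof. by move=> H1 H2; rewrite -aset_fix inE H1 H2. Qed.

Lemma aset_clp p (S X : {set V}) u w : u \in X -> own u = p -> w \in X -> E u w ->
  w \in aset p S X -> u \in aset p S X.
Proof.
move=> H1 H2 H3 H4 H5; rewrite -aset_fix inE H1 H2 eqxx /=; apply/orP; right.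
by apply/existsP; exists w; rewrite H3 H4 H5.
Qed.

Lemma aset_clq p (S X : {set V}) u : u \in X -> own u = opp p ->
  (forall w, w \in X -> E u w -> w \in aset p S X) -> u \in aset p S X.
Proof.
move=> H1 H2 H3; rewrite -aset_fix inE H1 (own_opp H2) /=; apply/orP; right.
by apply/forallP => w; apply/implyP => /andP[a b]; apply: H3.
Qed.

Lemma rk_gt0 p (S X : {set V}) u : u \in aset p S X -> 0 < rk p S X u.
Proof. by rewrite /rk fix_order_gt0. Qed.

Lemma aset_dec p (S X : {set V}) u : u \in aset p S X -> u \notin S ->
  (own u = p -> exists w, [/\ w \in X, E u w, w \in aset p S X & rk p S X w < rk p S X u]) /\
  (own u = opp p -> forall w, w \in X -> E u w -> w \in aset p S X /\ rk p S X w < rk p S X u).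
Proof.
move=> Hu HS; have := rk_gt0 Hu; have := Hu; rewrite -(in_iter_fix_orderE (Fa p S X)).
rewrite /rk; case: (fix_order _ u) => [//|m] /= Hm _.
have Hi := iter_sub_fix (Fa_mono p S X) m.
have Hs : forall w, w \in iter m (Fa p S X) set0 -> fix_order (Fa p S X) w < m.+1.
  by move=> w Hw; rewrite ltnS; apply: fix_order_small (Fa_mono p S X) _ _ Hw.
move: Hm; rewrite inE (negPf HS) /= => /andP[HX H]; split.
  move=> Ho; move: H; rewrite Ho eqxx => /existsP[w /and3P[a b c]].
  by exists w; split => //; [apply: (subsetP Hi)|apply: Hs].
move=> Ho; move: H; rewrite (own_opp Ho) => /forallP H w a b.
have c := implyP (H w) (introT andP (conj a b)).
by split; [apply: (subsetP Hi)|apply: Hs].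
Qed.

Definition astr p S X u := odflt (dflt X u)
  [pick w | [&& w \in X, E u w, w \in aset p S X & rk p S X w < rk p S X u]].

Lemma astrP p (S X : {set V}) u : subgame E X -> u \in X -> astr p S X u \in X /\ E u (astr p S X u).
Proof.
move=> HX Hu; rewrite /astr; case: pickP => [w /and4P[]//|_]; exact: dfltP.
Qed.

Lemma astr_dec p (S X : {set V}) u : u \in aset p S X -> u \notin S -> own u = p ->
  [/\ astr p S X u \in X, E u (astr p S X u), astr p S X u \in aset p S X &
      rk p S X (astr p S X u) < rk p S X u].
Proof.
move=> H1 H2 H3; have [/(_ H3) [w [a b c d]] _] := aset_dec H1 H2.
rewrite /astr; case: pickP => [x /and4P[]//|/(_ w)]; by rewrite a b c d.
Qed.

Definition pathin (X : {set V}) (r : nat -> V) := forall i, r i \in X /\ E (r i) (r i.+1).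

Lemma apath p (S X : {set V}) r i : pathin X r ->
  (forall j, r j \in aset p S X -> r j \notin S -> own (r j) = p -> r j.+1 = astr p S X (r j)) ->
  r i \in aset p S X -> exists j, i <= j /\ r j \in S.
Proof.
move=> Hp Hc; move Hn: (rk p S X (r i)) => n; move: (leqnn n); rewrite -{1}Hn.
elim: n i {Hn} => [|n IH] i Hn Hi.
  by move: (rk_gt0 Hi); rewrite leqn0 in Hn; rewrite (eqP Hn).
case HS: (r i \in S); first by exists i.
have HS' : r i \notin S by rewrite HS.
have [Hnext Hrk] : r i.+1 \in aset p S X /\ rk p S X (r i.+1) < rk p S X (r i).
  have [_ HE] := Hp i; have [HX1 _] := Hp i.+1.
  case: (own_cases (r i) p) => Ho.
    by rewrite (Hc _ Hi HS' Ho); have [] := astr_dec Hi HS' Ho.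
  by have [_ /(_ Ho _ HX1 HE)] := aset_dec Hi HS'.
have [j [Hj1 Hj2]] := IH i.+1 (leq_trans Hrk Hn) Hnext.
by exists j; split => //; apply: ltnW.
Qed.


Hypothesis Hnoloop : forall v, ~~ E v v.

Lemma wins_excl p r : wins pi p r -> wins pi (opp p) r -> False.
Proof.
move=> [q1 [o1 [i1 [n1 e1]]]] [q2 [o2 [i2 [n2 e2]]]].
have [m1 [h1 h1']] := i1 n2; have [m2 [h2 h2']] := i2 n1.
have := e2 _ h1; have := e1 _ h2; rewrite h1' h2' => a b.
have Hq : q1 = q2 by apply/eqP; rewrite eqn_leq a b.
by move: o1 o2; rewrite Hq => ->; case: p.
Qed.

Lemma wins_suffix p r t : wins pi p (fun i => r (i + t)) -> wins pi p r.
Proof.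
move=> [q [o [i [n e]]]]; exists q; split=> //; split.
  move=> m; have [k [h1 h2]] := i m; exists (k + t); split => //.
  exact: leq_trans h1 (leq_addr _ _).
exists (n + t) => m Hm; have := e (m - t); rewrite subnK; last first.
  exact: leq_trans (leq_addl _ _) Hm.
have Htm : t <= m by apply: leq_trans (leq_addl _ _) Hm.
by apply; rewrite leq_subRL // addnC.
Qed.

Lemma wins_top k r : (forall i, pi (r i) <= k) ->
  (forall n, exists m, n <= m /\ pi (r m) = k) -> wins pi (player_of_parity k) r.
Proof.
move=> H1 H2; exists k; split; first by rewrite /player_of_parity; case: (odd k).
by split=> //; exists 0 => m _.
Qed.

Definition mstep p (t1 t2 : V -> V) u := if own u == p then t1 u else t2 u.

Lemma mpath p (t1 t2 : V -> V) (X : {set V}) u :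
  (forall y, y \in X -> own y = p -> t1 y \in X /\ E y (t1 y)) ->
  (forall y, y \in X -> own y = opp p -> t2 y \in X /\ E y (t2 y)) -> u \in X ->
  exists r, [/\ r 0 = u, pathin X r, (forall i, own (r i) = p -> r i.+1 = t1 (r i)) &
    (forall i, own (r i) = opp p -> r i.+1 = t2 (r i))].
Proof.
move=> H1 H2 Hu; exists (fun i => iter i (mstep p t1 t2) u).
have Hs : forall i, iter i.+1 (mstep p t1 t2) u = mstep p t1 t2 (iter i (mstep p t1 t2) u) by [].
have Hc1 : forall y, own y = p -> mstep p t1 t2 y = t1 y by move=> y Hy; rewrite /mstep Hy eqxx.
have Hc2 : forall y, own y = opp p -> mstep p t1 t2 y = t2 y by move=> y Hy; rewrite /mstep (own_opp Hy).
have HX : forall i, iter i (mstep p t1 t2) u \in X.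
  elim=> [//|i IH]; rewrite Hs; case: (own_cases (iter i (mstep p t1 t2) u) p) => Ho.
    by rewrite Hc1 //; case: (H1 _ IH Ho).
  by rewrite Hc2 //; case: (H2 _ IH Ho).
split=> //; last by move=> i Ho; rewrite Hs Hc2.
  move=> i; split=> //; rewrite Hs; case: (own_cases (iter i (mstep p t1 t2) u) p) => Ho.
    by rewrite Hc1 //; case: (H1 _ (HX i) Ho).
  by rewrite Hc2 //; case: (H2 _ (HX i) Ho).
by move=> i Ho; rewrite Hs Hc1.
Qed.

Definition pdom p (X D : {set V}) (s : V -> V) :=
 [/\ D \subset X,
  (forall u, u \in D -> own u = p -> s u \in D /\ E u (s u)),
  (forall u w, u \in D -> own u = opp p -> w \in X -> E u w -> w \in D) &
  (forall r, pathin D r -> (forall i, own (r i) = p -> r i.+1 = s (r i)) -> wins pi p r)].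

Lemma pdom_win p (X D : {set V}) s r : pdom p X D s -> pathin X r -> r 0 \in D ->
  (forall i, r i \in D -> own (r i) = p -> r i.+1 = s (r i)) ->
  (forall i, r i \in D) /\ wins pi p r.
Proof.
move=> [H1 H2 H3 H4] Hr H0 Hc.
have HD : forall i, r i \in D.
  elim=> [//|i IH]; have [HX HE] := Hr i; have [HX1 _] := Hr i.+1.
  case: (own_cases (r i) p) => Ho; first by rewrite (Hc _ IH Ho); case: (H2 _ IH Ho).
  exact: H3 IH Ho HX1 HE.
split=> //; apply: H4; first by move=> i; split=> //; case: (Hr i).
by move=> i; apply: Hc.
Qed.

Lemma pdom_sub p (X Y D : {set V}) s : pdom p X D s -> D \subset Y -> Y \subset X -> pdom p Y D s.
Proof.
move=> [H1 H2 H3 H4] HDY /subsetP HYX; split=> // u w a b c; exact: H3 a b (HYX _ c).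
Qed.

Lemma pdom_trap p (X Y D : {set V}) s : pdom p X D s -> Y \subset X ->
  (forall u, u \in Y -> own u = p -> forall w, w \in X -> E u w -> w \in Y) ->
  pdom p Y (D :&: Y) s.
Proof.
move=> [H1 H2 H3 H4] /subsetP HYX HT; split.
- by apply/subsetP => u; rewrite inE => /andP[].
- move=> u; rewrite inE => /andP[a b] c; have [d e] := H2 _ a c.
  by rewrite inE d e; split=> //; apply: HT b c _ _ e; apply: (subsetP H1).
- move=> u w; rewrite !inE => /andP[a b] c d e; rewrite d andbT.
  exact: H3 a c (HYX _ d) e.
- move=> r Hr Hc; apply: H4 => // i; have [a b] := Hr i; move: a; rewrite inE => /andP[a _].
  by split.
Qed.

Lemma pdom_lift p (X Y D : {set V}) s : pdom p Y D s -> Y \subset X ->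
  (forall u, u \in Y -> own u = opp p -> forall w, w \in X -> E u w -> w \in Y) ->
  pdom p X D s.
Proof.
move=> [H1 H2 H3 H4] HYX HT; split=> //; first exact: subset_trans H1 HYX.
move=> u w a b c d; exact: (H3 u w a b (HT u (subsetP H1 _ a) b w c d) d).
Qed.

Lemma pdom_succ p (X D : {set V}) s u : subgame E X -> pdom p X D s -> u \in D ->
  exists w, w \in D /\ E u w.
Proof.
move=> HX [H1 H2 H3 H4] Hu; case: (own_cases u p) => Ho.
  by exists (s u); case: (H2 _ Hu Ho).
have [w [a b]] := HX u (subsetP H1 _ Hu); exists w; split=> //; exact: H3 Hu Ho a b.
Qed.

Lemma pdom_card p (X D : {set V}) s u : subgame E X -> pdom p X D s -> u \in D -> 1 < #|D|.
Proof.
move=> HX Hd Hu; have [w [Hw Huw]] := pdom_succ HX Hd Hu.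
have Hne : u != w by apply/eqP => Hq; move: (Hnoloop u); rewrite {2}Hq Huw.
have Hs : [set u; w] \subset D by apply/subsetP => x; rewrite !inE => /orP[] /eqP ->.
by have := subset_leq_card Hs; rewrite cards2 Hne.
Qed.

Lemma sub_compl p (S X : {set V}) : subgame E X -> subgame E (X :\: aset p S X).
Proof.
move=> HX u; rewrite inE => /andP[Hu HuX]; case: (own_cases u p) => Ho.
  have [w [a b]] := HX u HuX; exists w; rewrite inE a andbT; split=> //.
  by apply: contraNN Hu; apply: aset_clp.
apply: NNPP => Hn; move/negP: Hu; apply; apply: aset_clq => // w a b.
apply: NNPP => Hw; apply: Hn; exists w; by rewrite inE a andbT; split => //; apply/negP.
Qed.

Lemma trap_me p (S X : {set V}) u w : u \in X :\: aset p S X -> own u = p -> w \in X -> E u w ->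
  w \in X :\: aset p S X.
Proof.
rewrite !inE => /andP[a b] c d e; rewrite d andbT; apply: contraNN a; exact: aset_clp.
Qed.

Definition ml (x0 : V) (t : V -> V) : strategy V := fun h => t (last x0 h).

Lemma last_mkseq x0 (r : nat -> V) i : last x0 (mkseq r i.+1) = r i.
Proof. by rewrite mkseqS last_rcons. Qed.

Lemma ml_valid p (X : {set V}) x0 t : (forall y, y \in X -> own y = p -> t y \in X /\ E y (t y)) ->
  valid_strategy E VE p X (ml x0 t).
Proof. by move=> H h v a b; rewrite /ml last_rcons; apply: H. Qed.

Lemma ml_cons p x0 t r : consistent VE p (ml x0 t) r <-> forall i, own (r i) = p -> r i.+1 = t (r i).
Proof. by rewrite /consistent /ml; split=> H i; move: (H i); rewrite last_mkseq. Qed.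

Lemma hplay p (s1 s2 : strategy V) (X : {set V}) v : valid_strategy E VE p X s1 ->
  valid_strategy E VE (opp p) X s2 -> v \in X ->
  exists r, [/\ play_in E X v r, consistent VE p s1 r & consistent VE (opp p) s2 r].
Proof.
move=> H1 H2 Hv.
pose nxt (h : seq V) := if own (last v h) == p then s1 h else s2 h.
pose fix hist n := if n is n'.+1 then rcons (hist n') (nxt (hist n')) else [:: v].
pose r i := last v (hist i).
have Hh : forall i, hist i = mkseq r i.+1.
  elim=> [//|i IH]; rewrite mkseqS -IH; congr rcons.
  by rewrite /r /= last_rcons.
have Hn : forall i, r i.+1 = if own (r i) == p then s1 (rcons (mkseq r i) (r i)) else s2 (rcons (mkseq r i) (r i)).
  move=> i; rewrite -mkseqS -Hh.
  have -> : r i.+1 = nxt (hist i) by rewrite /r /= last_rcons.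
  by [].
have HX : forall i, r i \in X /\ E (r i) (r i.+1).
  suff HX : forall i, r i \in X.
    move=> i; split=> //; rewrite Hn; case: (own_cases (r i) p) => Ho.
      by rewrite Ho eqxx; case: (H1 (mkseq r i) (r i) (HX i) Ho).
    by rewrite (own_opp Ho); case: (H2 (mkseq r i) (r i) (HX i) Ho).
  elim=> [//|i IH]; rewrite Hn; case: (own_cases (r i) p) => Ho.
    by rewrite Ho eqxx; case: (H1 (mkseq r i) (r i) IH Ho).
  by rewrite (own_opp Ho); case: (H2 (mkseq r i) (r i) IH Ho).
exists r; split=> //.
- by move=> i Ho; rewrite Hn Ho eqxx -mkseqS.
- by move=> i Ho; rewrite Hn (own_opp Ho) -mkseqS.
Qed.

Lemma attrE p (S X : {set V}) v : subgame E X -> attr E VE p S X v <-> v \in aset p S X.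
Proof.
move=> HX; split.
  move=> [Hv [s [Hs Hr]]]; apply: NNPP => Hn.
  pose t u := odflt (dflt X u) [pick w | [&& w \in X, E u w & w \notin aset p S X]].
  have Ht : forall y, y \in X -> own y = opp p -> t y \in X /\ E y (t y).
    by move=> y Hy _; rewrite /t; case: pickP => [w /and3P[]//|_]; apply: dfltP.
  have [r [Hp Hc1 Hc2]] := hplay Hs (ml_valid v Ht) Hv.
  move/ml_cons: Hc2 => Hc2.
  have Hn' : forall i, r i \notin aset p S X.
    elim=> [|i IH]; first by case: Hp => -> _; apply/negP.
    have [_ /(_ i) [a b]] := Hp; have [_ /(_ i.+1) [c _]] := Hp.
    case: (own_cases (r i) p) => Ho.
      by apply: contraNN IH; apply: aset_clp.
    have HrX : r i \in X :\: aset p S X by rewrite inE IH.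
    have [w [Hw1 Hw2]] := sub_compl HX HrX.
    rewrite Hc2 // /t; case: pickP => [x /and3P[]//|/(_ w)].
    by move: Hw1; rewrite inE => /andP[-> ->]; rewrite Hw2.
  have [i Hi] := Hr r Hp Hc1; apply: (negP (Hn' i)); apply: aset_S => //.
  by case: Hp => _ /(_ i) [].
move=> Hv; split; first exact: aset_subP Hv.
exists (ml v (astr p S X)); split; first by apply: ml_valid => y Hy _; apply: astrP.
move=> r [H0 Hp] /ml_cons Hc.
have Hv0 : r 0 \in aset p S X by rewrite H0.
have [j [_ Hj]] := apath Hp (fun j _ _ Ho => Hc j Ho) Hv0.
by exists j.
Qed.

Lemma remE p (S X Y : {set V}) : subgame E X -> remove_attr E VE p S X Y -> Y = X :\: aset p S X.
Proof.
move=> HX HY; apply/setP => u; rewrite inE; apply/idP/idP.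
  by move=> /HY [a b]; rewrite a andbT; apply/negP => /(attrE _ _ _ HX).
move=> /andP[a b]; apply/HY; split=> // /(attrE _ _ _ HX); exact/negP.
Qed.

Lemma remI p (S X : {set V}) : subgame E X -> remove_attr E VE p S X (X :\: aset p S X).
Proof.
move=> HX u; rewrite inE; split.
  by move=> /andP[a b]; split=> // /(attrE _ _ _ HX); apply/negP.
by move=> [a b]; rewrite a andbT; apply/negP => /(attrE _ _ _ HX).
Qed.

Lemma aset0 p (X : {set V}) : subgame E X -> aset p set0 X = set0.
Proof.
move=> HX; apply/setP => u; rewrite inE; apply/negP => Hu.
have H1 : forall y, y \in X -> own y = p -> astr p set0 X y \in X /\ E y (astr p set0 X y).
  by move=> y Hy _; apply: astrP.
have H2 : forall y, y \in X -> own y = opp p -> dflt X y \in X /\ E y (dflt X y).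
  by move=> y Hy _; apply: dfltP.
have [r [H0 Hp Hc1 _]] := mpath H1 H2 (aset_subP Hu).
have Hv0 : r 0 \in aset p set0 X by rewrite H0.
have [j [_]] := apath Hp (fun j _ _ Ho => Hc1 j Ho) Hv0.
by rewrite inE.
Qed.


Hypothesis Hpos : forall v, 0 < pi v.

Definition Det (X : {set V}) := forall p, exists W s1 s2,
  pdom p X W s1 /\ pdom (opp p) X (X :\: W) s2.

Lemma pdom0 p (X : {set V}) s : pdom p X set0 s.
Proof.
split; first exact: sub0set.
- by move=> u; rewrite inE.
- by move=> u w; rewrite inE.
- by move=> r /(_ 0) []; rewrite inE.
Qed.


Lemma player_cases q p : q = p \/ q = opp p.
Proof. by case: q; case: p; auto. Qed.

Lemma det_flip (X : {set V}) p W s1 s2 : pdom p X W s1 -> pdom (opp p) X (X :\: W) s2 -> Det X.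
Proof.
move=> H1 H2 q; case: (player_cases q p) => ->; first by exists W, s1, s2.
exists (X :\: W), s2, s1; split=> //; rewrite oppK.
have -> : X :\: (X :\: W) = W.
  have [/subsetP HW _ _ _] := H1.
  apply/setP => u; rewrite !inE; case Hu: (u \in W) => /=; first by rewrite (HW _ Hu).
  by case: (u \in X).
done.
Qed.

Lemma det_empty (X : {set V}) : X = set0 -> Det X.
Proof.
move=> ->; apply: (det_flip (p := Even) (W := set0) (s1 := id) (s2 := id)).
  exact: pdom0.
by rewrite setD0; apply: pdom0.
Qed.

Lemma inf_or_fin (P : nat -> Prop) :
  (forall n, exists m, n <= m /\ P m) \/ (exists n, forall m, n <= m -> ~ P m).
Proof.
case: (classic (forall n, exists m, n <= m /\ P m)) => H; first by left.
right; apply: NNPP => H'; apply: H => n; apply: NNPP => Hn; apply: H'.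
by exists n => m Hm HP; apply: Hn; exists m.
Qed.

Lemma det k : forall X, subgame E X -> (forall u, u \in X -> pi u <= k) -> Det X.
Proof.
elim: k => [|k IHk] X HX Hk.
  apply: det_empty; apply/setP => u; rewrite inE; apply/negP => /Hk.
  by rewrite leqNgt Hpos.
suff main : forall n (X : {set V}), #|X| <= n -> subgame E X -> (forall u, u \in X -> pi u <= k.+1) -> Det X.
  exact: main (leqnn _) HX Hk.
clear X HX Hk.
elim=> [|n IHn] X Hn HX Hk.
  by apply: det_empty; apply/eqP; rewrite -cards_eq0 -leqn0.
set p := player_of_parity k.+1.
set S := top_prio pi X k.+1.
set A := aset p S X.
set Y := X :\: A.
have HY : subgame E Y by apply: sub_compl.
have HYX : Y \subset X by apply: subsetDl.
have HYk : forall u, u \in Y -> pi u <= k.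
  move=> u; rewrite inE => /andP[Hu HuX]; have := Hk _ HuX.
  rewrite leq_eqVlt ltnS => /orP[/eqP Heq|//].
  by move: Hu; rewrite /A aset_S // /S inE HuX Heq eqxx.
have [Yp [sYp [sYq [HYp HYq]]]] := IHk Y HY HYk p.
have [HYp1 HYp2 HYp3 HYp4] := HYp.
have [HYq1 HYq2 HYq3 HYq4] := HYq.
have HXk : forall r, pathin X r -> forall i, pi (r i) <= k.+1.
  by move=> r Hr i; apply: Hk; case: (Hr i).
case: (set_0Vmem (Y :\: Yp)) => [HYq0 | [x Hx]].
  have HYYp : forall u, u \in Y -> u \in Yp.
    move=> u Hu; apply: NNPP => Hn'; have : u \in Y :\: Yp by rewrite inE Hu andbT; apply/negP.
    by rewrite HYq0 inE.
  pose sg u := if u \in A then astr p S X u else sYp u.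
  apply: (det_flip (p := p) (W := X) (s1 := sg) (s2 := id)); last first.
    by rewrite setDv; apply: pdom0.
  split=> //.
  - move=> u Hu Ho; rewrite /sg; case HA: (u \in A); first exact: astrP.
    have HuY : u \in Y by rewrite inE HA Hu.
    have [a b] := HYp2 _ (HYYp _ HuY) Ho; split=> //.
    by apply: (subsetP HYX); apply: (subsetP HYp1).
  - move=> r Hr Hc; case: (inf_or_fin (fun m => r m \in A)) => [Hinf|[n0 Hfin]].
      apply: wins_top; first exact: HXk.
      move=> n1; have [m [Hm HmA]] := Hinf n1.
      have Hcc : forall j, r j \in A -> r j \notin S -> own (r j) = p -> r j.+1 = astr p S X (r j).
        by move=> j H1 _ Ho; rewrite (Hc j Ho) /sg H1.
      have [j [Hj HjS]] := apath Hr Hcc HmA.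
      by exists j; split; [apply: leq_trans Hj|move: HjS; rewrite inE => /andP[_ /eqP]].
    apply: (@wins_suffix _ _ n0); apply: HYp4.
      move=> i; have [a b] := Hr (i + n0); split; last by [].
      by apply: HYYp; rewrite inE a andbT; apply/negP; apply: Hfin; apply: leq_addl.
    move=> i Ho; rewrite /= (addSn i n0) (Hc _ Ho) /sg.
    by have := Hfin (i + n0) (leq_addl _ _); case: (_ \in A).
set Yq := Y :\: Yp.
set B := aset (opp p) Yq X.
set Z := X :\: B.
have HYqX : Yq \subset X by apply: subset_trans HYq1 HYX.
have HYqB : Yq \subset B by apply/subsetP => u Hu; apply: aset_S => //; apply: (subsetP HYqX).
have HZ : subgame E Z by apply: sub_compl.
have HZX : Z \subset X by apply: subsetDl.
have HZn : #|Z| <= n.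
  rewrite -ltnS; apply: leq_trans Hn; apply: proper_card; rewrite properE HZX /=.
  apply/subsetPn; exists x; first exact: (subsetP HYqX).
  by rewrite inE (subsetP HYqB _ Hx).
have HZk : forall u, u \in Z -> pi u <= k.+1 by move=> u /(subsetP HZX); apply: Hk.
have [Zp [sZp [sZq [HZp HZq]]]] := IHn Z HZn HZ HZk p.
have [HZp1 HZp2 HZp3 HZp4] := HZp.
have [HZq1 HZq2 HZq3 HZq4] := HZq.
have HBZp : forall w, w \in B -> w \notin Zp.
  move=> w Hw; apply/negP => /(subsetP HZp1); by rewrite inE Hw.
have HoppK : forall u, own u = p -> own u = opp (opp p) by move=> u ->; rewrite oppK.
have Bcl : forall u w, u \in B -> own u = p -> w \in X -> E u w -> w \in B.
  move=> u w Hu Ho Hw Huw; case HuYq: (u \in Yq).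
    have HuY : u \in Y by apply: (subsetP HYq1).
    have HwY : w \in Y by apply: trap_me HuY Ho Hw Huw.
    by apply: (subsetP HYqB); apply: HYq3 HuYq (HoppK _ Ho) HwY Huw.
  have [_ H2] := aset_dec Hu (negbT HuYq).
  by case: (H2 (HoppK _ Ho) w Hw Huw).
pose tau u := if u \in B then (if u \in Yq then sYq u else astr (opp p) Yq X u) else sZq u.
apply: (det_flip (p := p) (W := Zp) (s1 := sZp) (s2 := tau)).
  apply: pdom_lift HZp HZX _ => u Hu Ho w Hw Huw; exact: trap_me Hu Ho Hw Huw.
have HtauB : forall u, u \in B -> own u = opp p -> tau u \in B /\ E u (tau u).
  move=> u Hu Ho; rewrite /tau Hu; case HuYq: (u \in Yq).
    have [a b] := HYq2 _ HuYq Ho; split=> //; exact: (subsetP HYqB).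
  by have [a b c _] := astr_dec Hu (negbT HuYq) Ho.
have HtauYq : forall u, u \in Yq -> own u = opp p -> tau u = sYq u.
  by move=> u Hu _; rewrite /tau (subsetP HYqB _ Hu) Hu.
split.
- exact: subsetDl.
- move=> u; rewrite inE => /andP[HuZp HuX] Ho; case HuB: (u \in B).
    have [a b] := HtauB _ HuB Ho; split=> //.
    by rewrite inE HBZp // (subsetP (aset_sub _ _ _) _ a).
  have HuZ : u \in Z :\: Zp by rewrite !inE HuZp HuB HuX.
  rewrite /tau HuB; have [a b] := HZq2 _ HuZ Ho; split=> //.
  by move: a; rewrite !inE => /and3P[-> _ ->].
- move=> u w; rewrite inE => /andP[HuZp HuX] Ho Hw Huw; rewrite oppK in Ho.
  case HwB: (w \in B); first by rewrite inE HBZp // Hw.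
  case HuB: (u \in B); first by rewrite (Bcl _ _ HuB Ho Hw Huw) in HwB.
  have HuZ : u \in Z :\: Zp by rewrite !inE HuZp HuB HuX.
  have HwZ : w \in Z by rewrite inE HwB Hw.
  have := HZq3 _ _ HuZ (HoppK _ Ho) HwZ Huw.
  by rewrite !inE => /and3P[-> _ ->].
- move=> r Hr Hc.
  have HrX : pathin X r.
    by move=> i; have [a b] := Hr i; split=> //; move: a; rewrite inE => /andP[].
  case: (classic (exists n0, r n0 \in B)) => [[n0 HnB]|HnB].
    have HB : forall i, r (i + n0) \in B.
      elim=> [//|i IH]; rewrite addSn; have [a b] := HrX (i + n0); have [c _] := HrX (i + n0).+1.
      case: (own_cases (r (i + n0)) p) => Ho; first exact: Bcl IH Ho c b.
      by rewrite (Hc _ Ho); case: (HtauB _ IH Ho).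
    have Hrn : pathin X (fun i => r (i + n0)).
      by move=> i; have [a b] := HrX (i + n0); split.
    have Hcc : forall j, r (j + n0) \in B -> r (j + n0) \notin Yq -> own (r (j + n0)) = opp p ->
        r (j + n0).+1 = astr (opp p) Yq X (r (j + n0)).
      by move=> j H1 H2 Ho; rewrite (Hc _ Ho) /tau H1 (negPf H2).
    have [j [_ HjYq]] := apath (r := fun i => r (i + n0)) Hrn Hcc (HB 0).
    have HYqs : forall i, r (i + (j + n0)) \in Yq.
      elim=> [//|i IH]; rewrite addSn; have [a b] := HrX (i + (j + n0)); have [c _] := HrX (i + (j + n0)).+1.
      case: (own_cases (r (i + (j + n0))) p) => Ho.
        have HuY : r (i + (j + n0)) \in Y by apply: (subsetP HYq1).
        have HwY := trap_me HuY Ho c b.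
        exact: HYq3 IH (HoppK _ Ho) HwY b.
      by rewrite (Hc _ Ho) (HtauYq _ IH Ho); case: (HYq2 _ IH Ho).
    apply: (@wins_suffix _ _ (j + n0)); apply: HYq4.
      by move=> i; split=> //; case: (HrX (i + (j + n0))).
    by move=> i Ho; rewrite /= addSn (Hc _ Ho) (HtauYq _ (HYqs i) Ho).
  have HrB : forall i, r i \notin B by move=> i; apply/negP => Hi; apply: HnB; exists i.
  apply: HZq4.
    move=> i; have [a b] := Hr i; split=> //.
    by move: a; rewrite !inE (negPf (HrB i)) => /andP[-> ->].
  by move=> i Ho; rewrite (Hc _ Ho) /tau (negPf (HrB i)).
Qed.


Lemma key k me (G D : {set V}) s u : player_of_parity k = me -> subgame E G ->
  (forall v, v \in G -> pi v <= k) ->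
  pdom (opp me) G D s -> u \in D ->
  exists (D2 : {set V}) (s2 : V -> V), [/\ D2 \subset D, D2 != set0 &
    pdom (opp me) (G :\: aset me (top_prio pi G k) G) D2 s2].
Proof.
move=> Hme HG Hk Hd Hu.
have [HD1 HD2 HD3 HD4] := Hd.
set S := top_prio pi G k.
have HDsub : subgame E D by move=> v Hv; apply: pdom_succ HG Hd Hv.
set AD := aset me S D.
set D' := D :\: AD.
have HD'sub : subgame E D' by apply: sub_compl.
have HD'D : D' \subset D by apply: subsetDl.
have HDG := HD1.
have HD'k : forall v, v \in D' -> pi v <= k.
  by move=> v /(subsetP HD'D) /(subsetP HD1); apply: Hk.
have Fme : forall y w, y \in D' -> own y = me -> w \in G -> E y w -> w \in D'.
  move=> y w Hy Ho Hw Hyw.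
  have HwD : w \in D by apply: HD3 (subsetP HD'D _ Hy) _ Hw Hyw; rewrite oppK.
  exact: trap_me Hy Ho HwD Hyw.
have [Wo [so [sm [HWo HWm]]]] := det HD'sub HD'k (opp me).
rewrite oppK in HWm.
have [HW1 HW2 HW3 HW4] := HWo.
case: (set_0Vmem Wo) => [Wo0 | [x Hx]]; last first.
  exists Wo, so; split.
  - exact: subset_trans HW1 HD'D.
  - by apply/set0Pn; exists x.
  have HWoH : Wo \subset G :\: aset me S G.
    apply/subsetP => y Hy; have HyG : y \in G.
      by apply: (subsetP HD1); apply: (subsetP HD'D); apply: (subsetP HW1).
    rewrite inE HyG andbT; apply/negP => HyA.
    pose t2 z := if z \in Wo then so z else dflt G z.
    have Ht1 : forall z, z \in G -> own z = me -> astr me S G z \in G /\ E z (astr me S G z).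
      by move=> z Hz _; apply: astrP.
    have Ht2 : forall z, z \in G -> own z = opp me -> t2 z \in G /\ E z (t2 z).
      move=> z Hz Ho; rewrite /t2; case Hzw: (z \in Wo); last exact: dfltP.
      have [a b] := HW2 _ Hzw Ho; split=> //.
      by apply: (subsetP HD1); apply: (subsetP HD'D); apply: (subsetP HW1).
    have [r [H0 Hp Hc1 Hc2]] := mpath Ht1 Ht2 HyG.
    have HrW : forall i, r i \in Wo.
      elim=> [|i IH]; first by rewrite H0.
      have [a b] := Hp i; have [c _] := Hp i.+1.
      case: (own_cases (r i) me) => Ho.
        have := Fme _ _ (subsetP HW1 _ IH) Ho c b.
        by move=> Hd'; apply: HW3 IH _ Hd' b; rewrite oppK.
      by rewrite (Hc2 _ Ho) /t2 IH; case: (HW2 _ IH Ho).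
    have Hr0 : r 0 \in aset me S G by rewrite H0.
    have [j [_ HjS]] := apath Hp (fun j _ _ Ho => Hc1 j Ho) Hr0.
    have HjD' := subsetP HW1 _ (HrW j).
    move: HjD'; rewrite inE => /andP[HnA HjD]; move/negP: HnA; apply.
    exact: aset_S HjD HjS.
  split=> //.
  move=> y w Hy Ho Hw Hyw; rewrite oppK in Ho.
  have HwG : w \in G by move: Hw; rewrite inE => /andP[].
  by apply: HW3 Hy _ (Fme _ _ (subsetP HW1 _ Hy) Ho HwG Hyw) Hyw; rewrite oppK.
exfalso.
rewrite Wo0 setD0 in HWm.
have [HM1 HM2 HM3 HM4] := HWm.
pose tau y := if y \in AD then astr me S D y else if y \in D' then sm y else dflt G y.
pose s' y := if y \in D then s y else dflt G y.
have Ht1 : forall z, z \in G -> own z = me -> tau z \in G /\ E z (tau z).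
  move=> z Hz Ho; rewrite /tau; case HzA: (z \in AD).
    have [a b] := astrP me S HDsub (aset_subP HzA); split=> //; exact: (subsetP HD1).
  case HzD: (z \in D'); last exact: dfltP.
  have [a b] := HM2 _ HzD Ho; split=> //; exact: (subsetP HD1 _ (subsetP HD'D _ a)).
have Ht2 : forall z, z \in G -> own z = opp me -> s' z \in G /\ E z (s' z).
  move=> z Hz Ho; rewrite /s'; case HzD: (z \in D); last exact: dfltP.
  have [a b] := HD2 _ HzD Ho; split=> //; exact: (subsetP HD1).
have [r [H0 Hp Hc1 Hc2]] := mpath Ht1 Ht2 (subsetP HD1 _ Hu).
have [HrD Hwin] : (forall i, r i \in D) /\ wins pi (opp me) r.
  apply: pdom_win Hd Hp _ _; first by rewrite H0.
  by move=> i Hi Ho; rewrite (Hc2 _ Ho) /s' Hi.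
have HpD : pathin D r by move=> i; split=> //; case: (Hp i).
case: (inf_or_fin (fun m => r m \in AD)) => [Hinf|[n0 Hfin]].
  apply: (@wins_excl me r) => //; rewrite -Hme; apply: wins_top.
    by move=> i; apply: Hk; case: (Hp i).
  move=> n; have [m [Hm HmA]] := Hinf n.
  have Hcc : forall j, r j \in AD -> r j \notin S -> own (r j) = me -> r j.+1 = astr me S D (r j).
    by move=> j H1 _ Ho; rewrite (Hc1 _ Ho) /tau H1.
  have [j [Hj HjS]] := apath HpD Hcc HmA.
  by exists j; split; [apply: leq_trans Hj|move: HjS; rewrite inE => /andP[_ /eqP]].
have HrD' : forall i, r (i + n0) \in D'.
  by move=> i; rewrite inE HrD andbT; apply/negP; apply: Hfin; apply: leq_addl.
apply: (@wins_excl me r) => //; apply: (@wins_suffix _ _ n0); apply: HM4.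
  by move=> i; split=> //; case: (Hp (i + n0)).
move=> i Ho; rewrite /= addSn (Hc1 _ Ho) /tau.
by have := Hfin (i + n0) (leq_addl _ _); case: (_ \in AD) => //= _; rewrite HrD'.
Qed.

Lemma hist2pdom k p (G D : {set V}) : subgame E G -> (forall v, v \in G -> pi v <= k) ->
  dominion E VE pi p G D -> exists s, pdom p G D s.
Proof.
move=> HG Hk [HDG HD].
have Hdf : forall x0, valid_strategy E VE (opp p) G (ml x0 (dflt G)).
  by move=> x0; apply: ml_valid => y Hy _; apply: dfltP.
have HDsub : subgame E D.
  move=> v Hv; have [s [Hs Hr]] := HD v Hv.
  have [r [Hp Hc1 Hc2]] := hplay Hs (Hdf v) (subsetP HDG _ Hv).
  have [HrD _] := Hr r Hp Hc1; exists (r 1); split=> //.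
  by case: Hp => <- /(_ 0) [].
have Hcl : forall v, v \in D -> own v = opp p -> forall w, w \in G -> E v w -> w \in D.
  move=> v Hv Ho w Hw Hvw; have [s [Hs Hr]] := HD v Hv.
  pose t (h : seq V) := if h == [:: v] then w else dflt G (last v h).
  have Ht : valid_strategy E VE (opp p) G t.
    move=> h y Hy Hoy; rewrite /t; case: eqP => [Heq|_]; last by rewrite last_rcons; apply: dfltP.
    have : last v (rcons h y) = last v [:: v] by rewrite Heq.
    by rewrite last_rcons /= => ->.
  have [r [Hp Hc1 Hc2]] := hplay Hs Ht (subsetP HDG _ Hv).
  have [HrD _] := Hr r Hp Hc1.
  have H0 : r 0 = v by case: Hp.
  have Ho0 : own (r 0) = opp p by rewrite H0.
  have Hr1 : r 1 = w.
    rewrite (Hc2 0 Ho0) /t /mkseq /= H0; case: ifP => // /negP []; exact: eqxx.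
  by rewrite -Hr1.
have HDk : forall v, v \in D -> pi v <= k by move=> v /(subsetP HDG); apply: Hk.
have [W [s1 [s2 [H1 H2]]]] := det HDsub HDk p.
have [H11 H12 H13 H14] := H1.
have [H21 H22 H23 H24] := H2.
have HWD : W = D.
  apply/eqP; rewrite eqEsubset H11 /=; apply/subsetP => x Hx; apply: NNPP => HxW.
  have HxDW : x \in D :\: W by rewrite inE Hx andbT; apply/negP.
  have [s [Hs Hr]] := HD x Hx.
  pose tau y := if y \in D :\: W then s2 y else dflt G y.
  have Ht : valid_strategy E VE (opp p) G (ml x tau).
    apply: ml_valid => y Hy Ho; rewrite /tau; case Hyw: (y \in D :\: W); last exact: dfltP.
    have [a b] := H22 _ Hyw Ho; split=> //; apply: (subsetP HDG); exact: (subsetP H21).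
  have [r [Hp Hc1 /ml_cons Hc2]] := hplay Hs Ht (subsetP HDG _ Hx).
  have [HrD Hwin] := Hr r Hp Hc1.
  have HrW : forall i, r i \in D :\: W.
    elim=> [|i IH]; first by case: Hp => ->.
    case: (own_cases (r i) p) => Ho.
      by apply: H23 IH _ (HrD _) _; [rewrite oppK | case: Hp => _ /(_ i) []].
    by rewrite (Hc2 _ Ho) /tau IH; case: (H22 _ IH Ho).
  apply: (@wins_excl p r) => //; apply: H24.
    by move=> i; split=> //; case: Hp => _ /(_ i) [].
  by move=> i Ho; rewrite (Hc2 _ Ho) /tau HrW.
rewrite HWD in H1; exists s1; apply: pdom_lift H1 HDG _.
by move=> u Hu Ho w Hw Huw; apply: Hcl Hu Ho w Hw Huw.
Qed.


Lemma disjP (A B : {set V}) : (forall x, x \in A -> x \in B -> False) -> [disjoint A & B].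
Proof. move=> H; rewrite -setI_eq0; apply/eqP/setP => x; rewrite !inE; apply/negP => /andP[a b]; exact: H x a b. Qed.

Lemma pop d : player_of_parity d = opp (player_of_parity d.+1).
Proof. by rewrite /player_of_parity /=; case: (odd d). Qed.

Definition Pok d (G : {set V}) pm po (R : {set V}) := [/\ R \subset G,
   (forall D s, pdom (player_of_parity d) G D s -> #|D| <= pm -> D \subset R) &
   (forall D s, pdom (opp (player_of_parity d)) G D s -> #|D| <= po -> [disjoint D & R])].

Lemma triv_ok d (G : {set V}) pm po : subgame E G -> (G = set0 \/ pm <= 1) -> Pok d G pm po set0.
Proof.
move=> HG Hc; split; first exact: sub0set.
  move=> D s Hd HD; apply/subsetP => u Hu; exfalso; case: Hc => [HG0|Hpm].
    by have [/subsetP H1 _ _ _] := Hd; move: (H1 _ Hu); rewrite HG0 inE.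
  by have := pdom_card HG Hd Hu; rewrite ltnNge (leq_trans HD Hpm).
by move=> D s _ _; apply: disjP => x _; rewrite inE.
Qed.

Lemma prio_H d p (G : {set V}) : (forall v, v \in G -> pi v <= d.+1) ->
  forall v, v \in G :\: aset p (top_prio pi G d.+1) G -> pi v <= d.
Proof.
move=> Hk u; rewrite inE => /andP[Hu HuX]; have := Hk _ HuX.
rewrite leq_eqVlt ltnS => /orP[/eqP Heq|//].
by move: Hu; rewrite aset_S // inE HuX Heq eqxx.
Qed.

Lemma prio_sub (G G' : {set V}) d : G' \subset G -> (forall v, v \in G -> pi v <= d) ->
  forall v, v \in G' -> pi v <= d.
Proof. by move=> /subsetP H Hk v /H; apply: Hk. Qed.

Lemma onestep_i (d : nat) me (G H W D : {set V}) s pm :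
  subgame E G -> H = G :\: aset me (top_prio pi G d) G -> W \subset H ->
  (forall D s, pdom me H D s -> #|D| <= pm -> [disjoint D & W]) ->
  pdom me G D s -> #|D| <= pm -> D \subset G :\: aset (opp me) W G.
Proof.
move=> HG HH HWH Hsub Hd HD.
have [HD1 HD2 HD3 HD4] := Hd.
have HDH : pdom me H (D :&: H) s.
  apply: pdom_trap Hd _ _; first by rewrite HH; apply: subsetDl.
  by move=> u Hu Ho w Hw Huw; rewrite HH in Hu *; apply: trap_me Hu Ho Hw Huw.
have Hdis := Hsub _ _ HDH (leq_trans (subset_leq_card (subsetIl D H)) HD).
apply/subsetP => u Hu; have HuG := subsetP HD1 _ Hu.
rewrite inE HuG andbT; apply/negP => HuA.
pose t1 y := if y \in D then s y else dflt G y.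
have Ht1 : forall z, z \in G -> own z = me -> t1 z \in G /\ E z (t1 z).
  move=> z Hz Ho; rewrite /t1; case HzD: (z \in D); last exact: dfltP.
  have [a b] := HD2 _ HzD Ho; split=> //; exact: (subsetP HD1).
have Ht2 : forall z, z \in G -> own z = opp me -> astr (opp me) W G z \in G /\ E z (astr (opp me) W G z).
  by move=> z Hz _; apply: astrP.
have [r [H0 Hp Hc1 Hc2]] := mpath Ht1 Ht2 HuG.
have [HrD _] : (forall i, r i \in D) /\ wins pi me r.
  apply: pdom_win Hd Hp _ _; first by rewrite H0.
  by move=> i Hi Ho; rewrite (Hc1 _ Ho) /t1 Hi.
have Hr0 : r 0 \in aset (opp me) W G by rewrite H0.
have [j [_ HjW]] := apath Hp (fun j _ _ Ho => Hc2 j Ho) Hr0.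
move: Hdis; rewrite -setI_eq0 => /eqP /setP /(_ (r j)).
by rewrite !inE HrD HjW (subsetP HWH _ HjW).
Qed.

Section Level.
Variable d : nat.
Hypothesis IH : forall G pm po R, solveR E VE pi d G pm po R -> subgame E G ->
  (forall v, v \in G -> pi v <= d) -> Pok d G pm po R.

Lemma RL d' G pm po Gf Hf : repeatR E VE pi d' G pm po Gf Hf -> d' = d.+1 ->
  subgame E G -> (forall v, v \in G -> pi v <= d.+1) ->
  [/\ Gf \subset G /\ subgame E Gf,
   Hf = Gf :\: aset (player_of_parity d.+1) (top_prio pi Gf d.+1) Gf,
   (forall u, u \in Gf -> own u = opp (player_of_parity d.+1) -> forall w, w \in G -> E u w -> w \in Gf),
   (forall D s, pdom (player_of_parity d.+1) G D s -> #|D| <= pm -> D \subset Gf) &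
   (forall D s, pdom (opp (player_of_parity d.+1)) Gf D s -> #|D| <= po %/ 2 -> D = set0)].
Proof.
elim=> {d' G pm po Gf Hf}.
- move=> d0 G pm po H W G' Hr1 Hs Hr2 HW0 Hd0 HG Hk; subst d0.
  have HH := remE HG Hr1.
  have HG' : G' = G by rewrite (remE HG Hr2) HW0 aset0 // setD0.
  subst G'.
  have HHsub : subgame E H by rewrite HH; apply: sub_compl.
  have HHk : forall v, v \in H -> pi v <= d by rewrite HH; apply: prio_H.
  have [HWH Hi Hii] := IH Hs HHsub HHk.
  split=> //.
  + by move=> D s [] .
  + move=> D s Hd HD; apply/eqP; apply: contraT => /set0Pn [u Hu].
    have [D2 [s2 [HD2D HD20 HD2]]] := key (erefl _) HG Hk Hd Hu.
    rewrite -HH in HD2.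
    have := Hi D2 s2; rewrite pop => /(_ HD2).
    move=> /(_ (leq_trans (subset_leq_card HD2D) HD)).
    rewrite HW0 subset0 => HD2e; by rewrite HD2e in HD20.
- move=> d0 G pm po H W G' Gf Hf Hr1 Hs Hr2 HWn0 HR IHR Hd0 HG Hk; subst d0.
  have HH := remE HG Hr1.
  have HG' := remE HG Hr2.
  have HHsub : subgame E H by rewrite HH; apply: sub_compl.
  have HHk : forall v, v \in H -> pi v <= d by rewrite HH; apply: prio_H.
  have [HWH Hi Hii] := IH Hs HHsub HHk.
  have HG'sub : subgame E G' by rewrite HG'; apply: sub_compl.
  have HG'G : G' \subset G by rewrite HG'; apply: subsetDl.
  have [[IH1 IH2] IH3 IH4 IH5 IH6] := IHR (erefl _) HG'sub (prio_sub HG'G Hk).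
  split=> //.
  + by split=> //; apply: subset_trans IH1 HG'G.
  + move=> u Hu Ho w Hw Huw.
    have HuG' := subsetP IH1 _ Hu; rewrite HG' in HuG'.
    have HwG' : w \in G' by rewrite HG'; apply: trap_me HuG' Ho Hw Huw.
    exact: IH4 Hu Ho w HwG' Huw.
  + move=> D s Hd HD.
    have HDG' : D \subset G'.
      rewrite HG'; apply: onestep_i HG HH HWH _ Hd HD.
      by move=> D' s' Hd' HD'; apply: (Hii D' s' _ HD'); rewrite pop oppK.
    exact: IH5 D s (pdom_sub Hd HDG' HG'G) HD.
Qed.

End Level.


Lemma main d : forall G pm po R, solveR E VE pi d G pm po R -> subgame E G ->
  (forall v, v \in G -> pi v <= d) -> Pok d G pm po R.
Proof.
elim: d => [|d IHd] G pm po R HS HG Hk.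
  inversion HS; subst; exact: triv_ok.
inversion HS as [d0 G0 pm0 po0 Htriv| d0 G0 pm0 po0 Gl Hl W G2 Gf HG0 Hpm HR HW Hrem Hwh]; subst.
  exact: triv_ok.
have [[HGlG HGlsub] HHl HtrapGl RLi RLii] := RL IHd HR (erefl _) HG Hk.
have HHlsub : subgame E Hl by rewrite HHl; apply: sub_compl.
have HHlk : forall v, v \in Hl -> pi v <= d.
  by rewrite HHl; apply: prio_H; apply: prio_sub HGlG Hk.
have [HWHl Si Sii] := IHd _ _ _ _ HW HHlsub HHlk.
have HG2 := remE HGlsub Hrem.
have HG2sub : subgame E G2 by rewrite HG2; apply: sub_compl.
have HG2Gl : G2 \subset Gl by rewrite HG2; apply: subsetDl.
have HG2k := prio_sub HG2Gl (prio_sub HGlG Hk).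
have Hwc : (W = set0 /\ R = G2) \/ exists Hf, repeatR E VE pi d.+1 G2 pm po R Hf.
  inversion Hwh; subst; [by left | by right; eexists; eauto].
have HGfG2 : R \subset G2.
  case: Hwc => [[_ ->]|[Hf HRf]]; first exact: subxx.
  by have [[]] := RL IHd HRf (erefl _) HG2sub HG2k.
split.
- exact: subset_trans HGfG2 (subset_trans HG2Gl HGlG).
- move=> D s Hd HD.
  have HDGl := RLi D s Hd HD.
  have HdGl := pdom_sub Hd HDGl HGlG.
  have HDG2 : D \subset G2.
    rewrite HG2; apply: onestep_i HGlsub HHl HWHl _ HdGl HD.
    by move=> D' s' Hd' HD'; apply: (Sii D' s' _ HD'); rewrite pop oppK.
  case: Hwc => [[_ ->]|[Hf HRf]] //.
  have [_ _ _ RLi' _] := RL IHd HRf (erefl _) HG2sub HG2k.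
  exact: RLi' D s (pdom_sub HdGl HDG2 HG2Gl) HD.
- move=> D s Hd HD.
  have Hd1 : pdom (opp (player_of_parity d.+1)) Gl (D :&: Gl) s.
    exact: (pdom_trap Hd HGlG HtrapGl).
  case: (set_0Vmem (D :&: Gl)) => [D10 | [u Hu]].
    apply: disjP => x HxD HxGf.
    have : x \in D :&: Gl.
      by rewrite inE HxD; apply: (subsetP HG2Gl); apply: (subsetP HGfG2).
    by rewrite D10 inE.
  have HGlk := prio_sub HGlG Hk.
  have [D2 [s2 [HD2D1 HD20 HD2]]] := key (erefl _) HGlsub HGlk Hd1 Hu.
  rewrite -HHl in HD2.
  have HD1po : #|D :&: Gl| <= po := leq_trans (subset_leq_card (subsetIl _ _)) HD.
  have HD2W : D2 \subset W.
    apply: (Si D2 s2); first by rewrite pop.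
    exact: leq_trans (subset_leq_card HD2D1) HD1po.
  have HD2big : po %/ 2 < #|D2|.
    rewrite ltnNge; apply/negP => Hsmall.
    have HD2Gl : pdom (opp (player_of_parity d.+1)) Gl D2 s2.
      apply: pdom_lift HD2 _ _; first by rewrite HHl; apply: subsetDl.
      move=> y Hy Ho w Hw Hyw; rewrite oppK in Ho; rewrite HHl in Hy *.
      exact: trap_me Hy Ho Hw Hyw.
    by move: HD20; rewrite (RLii D2 s2 HD2Gl Hsmall) eqxx.
  have Hd3 : pdom (opp (player_of_parity d.+1)) G2 ((D :&: Gl) :&: G2) s.
    apply: pdom_trap Hd1 HG2Gl _ => y Hy Ho w Hw Hyw; rewrite HG2 in Hy *.
    exact: trap_me Hy Ho Hw Hyw.
  have HD3small : #|(D :&: Gl) :&: G2| <= po %/ 2.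
    have Hsub3 : (D :&: Gl) :&: G2 \subset (D :&: Gl) :\: D2.
      apply/subsetP => y; rewrite !inE => /andP[/andP[a b] c].
      apply/andP; split; last by rewrite a b.
      apply/negP => HyD2; move: c; rewrite HG2 inE => /andP[/negP []].
      exact: aset_S b (subsetP HD2W _ HyD2).
    have := subset_leq_card Hsub3; rewrite cardsD (setIidPr HD2D1) => H3.
    have := divn_eq po 2; have := ltn_pmod po (isT : 0 < 2).
    move: H3 HD1po HD2big; set a := #|_|; set b := #|_|; set c := #|_|.
    move=> *; lia.
  case: Hwc => [[HW0 _]|[Hf HRf]].
    by move: HD20; rewrite -subset0 -HW0 HD2W.
  have [[HGfG2' _] _ Htr _ RLii'] := RL IHd HRf (erefl _) HG2sub HG2k.
  have Hd4 := pdom_trap Hd3 HGfG2' (fun u Hu Ho w Hw Huw => Htr u Hu Ho w Hw Huw).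
  have := RLii' _ _ Hd4 (leq_trans (subset_leq_card (subsetIl _ _)) HD3small).
  move=> H0; apply: disjP => x HxD HxGf.
  have : x \in ((D :&: Gl) :&: G2) :&: R.
    have HxG2 := subsetP HGfG2' _ HxGf.
    by rewrite !inE HxD HxGf HxG2 (subsetP HG2Gl _ HxG2).
  by rewrite H0 inE.
Qed.


Lemma exist d : forall (G : {set V}) pm po, subgame E G -> (forall v, v \in G -> pi v <= d) ->
  exists R, solveR E VE pi d G pm po R.
Proof.
elim: d => [|d IHd] G pm po HG Hk.
  exists set0; apply: solve_triv; left; apply/setP => u; rewrite inE.
  by apply/negP => /Hk; rewrite leqNgt Hpos.
have Hrep : forall n (G0 : {set V}), #|G0| < n -> subgame E G0 ->
    (forall v, v \in G0 -> pi v <= d.+1) -> exists Gl Hl, repeatR E VE pi d.+1 G0 pm po Gl Hl.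
  elim=> [//|n IHn] G0 Hn HG0 Hk0.
  pose H := G0 :\: aset (player_of_parity d.+1) (top_prio pi G0 d.+1) G0.
  have HHsub : subgame E H by apply: sub_compl.
  have HHk : forall v, v \in H -> pi v <= d by apply: prio_H.
  have [W HW] := IHd H (po %/ 2) pm HHsub HHk.
  have [HWH _ _] := main HW HHsub HHk.
  pose G' := G0 :\: aset (opp (player_of_parity d.+1)) W G0.
  have Hr1 := remI (player_of_parity d.+1) (top_prio pi G0 d.+1) HG0.
  have Hr2 := remI (opp (player_of_parity d.+1)) W HG0.
  case: (set_0Vmem W) => [HW0 | [x Hx]].
    by exists G', H; apply: repeat_stop Hr1 HW Hr2 HW0.
  have HW0 : W != set0 by apply/set0Pn; exists x.
  have HG'sub : subgame E G' by apply: sub_compl.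
  have HxG0 : x \in G0.
    by have := subsetP HWH _ Hx; rewrite inE => /andP[].
  have HG'n : #|G'| < n.
    have : #|G'| < #|G0|.
      apply: proper_card; rewrite properE subsetDl /=; apply/subsetPn; exists x => //.
      by rewrite inE (aset_S _ HxG0 Hx).
    by move=> H1; apply: leq_trans H1 _; rewrite -ltnS.
  have [Gl [Hl HR]] := IHn G' HG'n HG'sub (prio_sub (subsetDl _ _) Hk0).
  by exists Gl, Hl; apply: repeat_go Hr1 HW Hr2 HW0 HR.
case: (boolP ((G == set0) || (pm <= 1))) => Hc.
  exists set0; apply: solve_triv; case/orP: Hc => [/eqP ->|]; auto.
move: Hc; rewrite negb_or -ltnNge => /andP[HG0 Hpm].
have [Gl [Hl HR]] := Hrep _ G (ltnSn _) HG Hk.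
have [[HGlG HGlsub] HHl _ _ _] := RL (@main d) HR (erefl _) HG Hk.
have HHlsub : subgame E Hl by rewrite HHl; apply: sub_compl.
have HHlk : forall v, v \in Hl -> pi v <= d.
  by rewrite HHl; apply: prio_H; apply: prio_sub HGlG Hk.
have [W HW] := IHd Hl po pm HHlsub HHlk.
pose G2 := Gl :\: aset (opp (player_of_parity d.+1)) W Gl.
have Hrem := remI (opp (player_of_parity d.+1)) W HGlsub.
have HG2sub : subgame E G2 by apply: sub_compl.
have HG2k := prio_sub (subsetDl Gl (aset (opp (player_of_parity d.+1)) W Gl)) (prio_sub HGlG Hk).
have [Gf Hwh] : exists Gf, whileR E VE pi d.+1 W G2 pm po Gf.
  case: (set_0Vmem W) => [HW0|[x Hx]]; first by exists G2; apply: while_stop.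
  have [Gf [Hf HRf]] := Hrep _ G2 (ltnSn _) HG2sub HG2k.
  have HW0 : W != set0 by apply/set0Pn; exists x.
  by exists Gf; apply: while_go HW0 HRf.
by exists Gf; apply: solve_step HG0 Hpm HR HW Hrem Hwh.
Qed.

Lemma final (G : {set V}) (HG : subgame E G) (pE pO d : nat)
  (Hd : forall v, v \in G -> pi v <= d) :
  (~~ odd d ->
     (exists R, solveR E VE pi d G pE pO R) /\
     forall R, solveR E VE pi d G pE pO R ->
       (forall D : {set V}, dominion E VE pi Even G D -> #|D| <= pE -> D \subset R) /\
       (forall D : {set V}, dominion E VE pi Odd G D -> #|D| <= pO -> [disjoint D & R])) /\
  (odd d ->
     (exists R, solveR E VE pi d G pO pE R) /\
     forall R, solveR E VE pi d G pO pE R ->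
       (forall D : {set V}, dominion E VE pi Odd G D -> #|D| <= pO -> D \subset R) /\
       (forall D : {set V}, dominion E VE pi Even G D -> #|D| <= pE -> [disjoint D & R])).
Proof.
split=> Hodd.
  have Hme : player_of_parity d = Even by rewrite /player_of_parity (negPf Hodd).
  split; first exact: exist.
  move=> R HS; have [_ Hi Hii] := main HS HG Hd; rewrite Hme in Hi Hii.
  split=> D HD Hc; have [s Hs] := hist2pdom HG Hd HD; [exact: Hi Hs Hc | exact: Hii Hs Hc].
have Hme : player_of_parity d = Odd by rewrite /player_of_parity Hodd.
split; first exact: exist.
move=> R HS; have [_ Hi Hii] := main HS HG Hd; rewrite Hme in Hi Hii.
split=> D HD Hc; have [s Hs] := hist2pdom HG Hd HD; [exact: Hi Hs Hc | exact: Hii Hs Hc].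
Qed.

End PG.

Theorem lemma4p1 (V : finType) (E : rel V) (VE : {set V}) (pi : V -> nat)
  (Hnoloop : forall v, ~~ E v v)
  (Hsucc : forall v, exists w, E v w)
  (Hpos : forall v, 0 < pi v)
  (G : {set V}) (HG : subgame E G)
  (pE pO d : nat) (HpE : 0 < pE) (HpO : 0 < pO)
  (Hd : forall v, v \in G -> pi v <= d) :
  (~~ odd d ->
     (exists R, solveR E VE pi d G pE pO R) /\
     forall R, solveR E VE pi d G pE pO R ->
       (forall D : {set V}, dominion E VE pi Even G D -> #|D| <= pE -> D \subset R) /\
       (forall D : {set V}, dominion E VE pi Odd G D -> #|D| <= pO -> [disjoint D & R])) /\
  (odd d ->
     (exists R, solveR E VE pi d G pO pE R) /\
     forall R, solveR E VE pi d G pO pE R ->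
       (forall D : {set V}, dominion E VE pi Odd G D -> #|D| <= pO -> D \subset R) /\
       (forall D : {set V}, dominion E VE pi Even G D -> #|D| <= pE -> [disjoint D & R])).
Proof.
exact: (final VE Hnoloop Hpos HG pE pO Hd).
Qed.
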